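(* Let $f_0$ be an arithmetic function, let $m>1$ and $n\ge1$. Then $C_m(n)=C_{m-1}(n)\cdot L_n$; equivalently, for all $1\le k\le n$, \[c_m(n,k)=\sum_{i=k}^n\binom{i-1}{k-1}c_{m-1}(n,i).\]
   Context: An arithmetic function is a function $f_0:\{1,2,\ldots\}\to\mathbb{C}$. For $m\ge 1$, $f_m$ is the invert transform of $f_{m-1}$, i.e. $f_m(n)=f_{m-1}(n)+\sum_{i=1}^{n-1}f_{m-1}(i)f_m(n-i)$ for $n\ge1$. For $m\ge1$ the numbers $c_m(n,k)$, $0\le k\le n$, are defined by $c_m(0,0)=1$, $c_m(n,0)=0$ for $n\ge1$, and $c_m(n,k)=\sum_{i=1}^{n-k+1}f_{m-1}(i)\,c_m(n-i,k-1)$ for $1\le k\le n$. $C_m(n)$ is the $n\times n$ lower triangular matrix whose $(r,k)$ entry is $c_m(r,k)$ for $1\le k\le r\le n$ (and $0$ for $k>r$), and $L_n$ is the $n\times n$ lower triangular Pascal matrix whose $(r,k)$ entry is $\binom{r-1}{k-1}$. *)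

(* Defs.v *)
From HB Require Import structures.
From mathcomp Require Import all_boot all_order all_algebra.
From mathcomp Require Import complex.
From mathcomp Require Import reals.
Set Implicit Arguments. Unset Strict Implicit. Unset Printing Implicit Defensive.
Import Order.TTheory GRing.Theory Num.Theory.
Local Open Scope ring_scope.

(* Arithmetic functions are modelled as h : nat -> C; only values at
   positive arguments are ever used (the value at 0 is irrelevant). *)

Section Defs.
Variable C : comRingType.

(* inv_seq h n = [:: g 0; g 1; ...; g n] where g is the invert transform of h
   (g 0 is a dummy value 0). *)
Fixpoint inv_seq (h : nat -> C) (n : nat) : seq C :=
  match n with
  | 0 => [:: 0]
  | n'.+1 => let s := inv_seq h n' in
      rcons s (h n + \sum_(1 <= i < n) h i * nth 0 s (n - i))
  end.

(* invert transform: g(n) = h(n) + sum_{i=1}^{n-1} h(i) g(n-i) *)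
Definition invert (h : nat -> C) (n : nat) : C := nth 0 (inv_seq h n) n.

Definition fm (f0 : nat -> C) (m : nat) : nat -> C := iter m invert f0.

Fixpoint cc (g : nat -> C) (n k : nat) : C :=
  match k with
  | 0 => (n == 0)%:R
  | k'.+1 => \sum_(1 <= i < (n - k').+1) g i * cc g (n - i) k'
  end.

Definition cm (f0 : nat -> C) (m n k : nat) : C := cc (fm f0 m.-1) n k.

(* C_m(n): (r,k) entry c_m(r,k) for 1 <= k <= r <= n, 0 for k > r.
   Row/column indices i j : 'I_n stand for r = i+1, k = j+1. *)
Definition Cmat (f0 : nat -> C) (m n : nat) : 'M[C]_n :=
  \matrix_(i < n, j < n) (if (j <= i)%N then cm f0 m i.+1 j.+1 else 0).

Definition Lmat (n : nat) : 'M[C]_n :=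
  \matrix_(i < n, j < n) ('C(i, j))%:R.
End Defs.

(* Main.v *)
Require Import Defs.
From HB Require Import structures.
From mathcomp Require Import all_boot all_order all_algebra.
From mathcomp Require Import zify ring.
From mathcomp Require Import complex.
From mathcomp Require Import reals.
Import Order.TTheory GRing.Theory Num.Theory.
Local Open Scope ring_scope.

Section Core.
Variable C : comRingType.

Definition Pp (a : nat -> C) (N : nat) : {poly C} :=
  \poly_(i < N) (if i == 0%N then 0 else a i).

Lemma coefPp a N i : (Pp a N)`_i = if ((i < N) && (i != 0))%N then a i else 0.
Proof. rewrite /Pp coef_poly; case: (i < N)%N => //=; by case: (i == 0)%N. Qed.

Lemma cc_small (a : nat -> C) m k : (m < k)%N -> cc a m k = 0.
Proof.
case: k => //= k H. rewrite (_ : (m - k = 0)%N); last by lia.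
by rewrite big_geq.
Qed.

Lemma cc_coef (a : nat -> C) N n k : (n < N)%N -> cc a n k = ((Pp a N) ^+ k)`_n.
Proof.
elim: k n => [|k IH] n HN /=.
  by rewrite expr0 coef1.
rewrite exprS coefM -(big_mkord xpredT (fun j => (Pp a N)`_j * (Pp a N ^+ k)`_(n - j))).
rewrite [RHS]big_ltn // coefPp /= andbF mul0r add0r.
rewrite [RHS](big_cat_nat _ (n := (n - k).+1)) /=; [|lia|lia].
rewrite [X in _ = _ + X]big1_seq ?addr0.
  apply: eq_big_nat => i /andP[H1 H2].
  rewrite coefPp IH; last by lia.
  by rewrite ifT //; apply/andP; split; lia.
move=> i /andP[_]; rewrite mem_index_iota => /andP[H1 H2].
rewrite -IH; last by lia. rewrite cc_small ?mulr0 //; lia.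
Qed.

Lemma inv_seq_nth (h : nat -> C) n j : (j <= n)%N -> nth 0 (inv_seq h n) j = invert h j.
Proof.
elim: n j => [|n IH] j Hj.
  by have -> : j = 0%N by lia.
have Hs : forall n, size (inv_seq h n) = n.+1.
  by elim=> //= n' IH'; rewrite size_rcons IH'.
case: (ltnP j n.+1) => Hjn.
  by rewrite /= nth_rcons Hs Hjn IH.
by have -> : j = n.+1 by lia.
Qed.

Lemma invert_rec (h : nat -> C) n : (0 < n)%N ->
  invert h n = h n + \sum_(1 <= i < n) h i * invert h (n - i).
Proof.
case: n => // n _.
have Hs : forall n, size (inv_seq h n) = n.+1.
  by elim=> //= n' IH'; rewrite size_rcons IH'.
rewrite /invert /= nth_rcons Hs ltnn eqxx; congr (_ + _).
apply: eq_big_nat => i /andP[H1 H2].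
by rewrite inv_seq_nth //; lia.
Qed.


Definition eqm (N : nat) (p q : {poly C}) := forall i, (i < N)%N -> p`_i = q`_i.

Lemma eqm_refl N p : eqm N p p. Proof. by []. Qed.
Lemma eqm_sym N p q : eqm N p q -> eqm N q p. Proof. by move=> H i Hi; rewrite H. Qed.
Lemma eqm_trans N p q r : eqm N p q -> eqm N q r -> eqm N p r.
Proof. by move=> H1 H2 i Hi; rewrite H1 ?H2. Qed.
Lemma eqm_add N p q p' q' : eqm N p q -> eqm N p' q' -> eqm N (p + p') (q + q').
Proof. by move=> H1 H2 i Hi; rewrite !coefD H1 ?H2. Qed.
Lemma eqm_sub N p q p' q' : eqm N p q -> eqm N p' q' -> eqm N (p - p') (q - q').
Proof. by move=> H1 H2 i Hi; rewrite !coefB H1 ?H2. Qed.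
Lemma eqm_mulr N p q r : eqm N p q -> eqm N (p * r) (q * r).
Proof.
move=> H i Hi; rewrite !coefM; apply: eq_bigr => j _.
by rewrite H //; apply: leq_ltn_trans Hi; rewrite -ltnS.
Qed.
Lemma eqm_mull N p q r : eqm N p q -> eqm N (r * p) (r * q).
Proof. by move=> H; rewrite ![r * _]mulrC; apply: eqm_mulr. Qed.

Arguments eqm_sym {N p q}.
Arguments eqm_trans {N p q r}.
Arguments eqm_add {N p q p' q'}.
Arguments eqm_sub {N p q p' q'}.
Arguments eqm_mulr {N p q} r.
Arguments eqm_mull {N p q} r.

Lemma pow_small (y : {poly C}) : y`_0 = 0 -> forall k i, (i < k)%N -> (y ^+ k)`_i = 0.
Proof.
move=> y0; elim=> // k IH i Hi.
rewrite exprS coefM big1 // => j _.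
case: j => [[|j'] Hj] /=; first by rewrite y0 mul0r.
rewrite IH ?mulr0 //; lia.
Qed.

Lemma eqm_kill N (y : {poly C}) p r : y`_0 = 0 -> eqm N (p + r * y ^+ N) p.
Proof.
move=> y0 i Hi; rewrite coefD mulrC coefM big1 ?addr0 // => j _.
by rewrite pow_small ?mul0r //; apply: leq_ltn_trans Hi; rewrite -ltnS.
Qed.

Section Main.
Variable g : nat -> C.
Variable M : nat.
Local Notation N := M.+1.
Local Notation y := (Pp g N).
Local Notation Ph := (Pp (invert g) N).
Definition S := \sum_(i < N) y ^+ i.
Definition T k := \sum_(i < N) ('C(i, k))%:R * y ^+ i.+1.
Definition U k := \sum_(i < M) ('C(i, k))%:R * y ^+ i.+1.

Lemma y0 : y`_0 = 0. Proof. by rewrite coefPp andbF. Qed.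

Lemma oneS : (1 - y) * S = 1 - y ^+ N.
Proof.
rewrite -{2}(expr1n _ N) subrXX /S; congr (_ * _).
by apply: eq_bigr => i _; rewrite expr1n mul1r.
Qed.

Lemma solve (p q : {poly C}) : eqm N (p - y * p) q -> eqm N p (q * S).
Proof.
move=> H.
have E : p = (p - y * p) * S + p * y ^+ N.
  have := oneS; move=> E.
  have -> : (p - y * p) * S = p * ((1 - y) * S) by ring.
  rewrite E; ring.
rewrite {1}E; apply: eqm_trans (eqm_kill _ _ _ _ y0) _.
exact: eqm_mulr.
Qed.

Arguments solve {p q}.

Lemma stepA : eqm N Ph (y + y * Ph).
Proof.
move=> i Hi; rewrite coefD coefM !coefPp Hi /=.
case: i Hi => [|i] Hi /=.
  by rewrite big_ord1 y0 mul0r addr0.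
rewrite invert_rec //; congr (_ + _).
rewrite -(big_mkord xpredT (fun j => y`_j * Ph`_(i.+1 - j))).
rewrite [RHS]big_ltn // y0 mul0r add0r [RHS]big_nat_recr //= subnn.
rewrite [Ph`_0]coefPp andbF mulr0 addr0.
apply: eq_big_nat => j /andP[H1 H2].
rewrite !coefPp !ifT //; apply/andP; split; lia.
Qed.

Lemma stepB : eqm N Ph (y * S).
Proof.
apply: solve.
have H := eqm_sub (stepA) (eqm_refl N (y * Ph)).
apply: eqm_trans H _.
by rewrite addrK.
Qed.

Lemma TU k : T k = U k + ('C(M, k))%:R * y ^+ N.
Proof. by rewrite /T big_ord_recr. Qed.

Lemma T0 : T 0 = y * S.
Proof.
rewrite /T /S mulr_sumr; apply: eq_bigr => i _.
by rewrite bin0 mul1r exprS.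
Qed.

Lemma TS k : T k.+1 = y * (U k.+1 + U k).
Proof.
rewrite /T big_ord_recl bin_small // mul0r add0r /U -big_split mulr_sumr.
apply: eq_bigr => i _ /=.
by rewrite /bump /= add1n binS natrD exprS; ring.
Qed.

Lemma stepD k : eqm N (T k.+1 - y * T k.+1) (y * T k).
Proof.
have E : T k.+1 - y * T k.+1 = y * T k +
   (- (y * (('C(M, k.+1))%:R + ('C(M, k))%:R))) * y ^+ N.
  rewrite {1}TS (TU k.+1) (TU k); ring.
rewrite E; exact: eqm_kill _ _ _ _ y0.
Qed.

Lemma stepE k : eqm N (T k.+1) (Ph * T k).
Proof.
apply: eqm_trans (solve (stepD k)) _.
apply: eqm_sym; apply: eqm_trans (eqm_mulr (T k) stepB) _.
by rewrite mulrAC -mulrA.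
Qed.

Lemma stepF k : eqm N (Ph ^+ k.+1) (T k).
Proof.
elim: k => [|k IH].
  by rewrite expr1 T0; exact: stepB.
rewrite exprS; apply: eqm_trans (eqm_mull Ph IH) _.
exact: eqm_sym (stepE k).
Qed.

End Main.

Lemma core (g : nat -> C) n k :
  cc (invert g) n k.+1 = \sum_(i < n.+1) ('C(i, k))%:R * cc g n i.+1.
Proof.
rewrite (cc_coef _ n.+1) // (stepF g n k) // /T coef_sum.
apply: eq_bigr => i _.
by rewrite mulr_natl coefMn (cc_coef _ n.+1) // mulr_natl.
Qed.

End Core.

Lemma core' (C : comRingType) (g : nat -> C) n k :
  cc (invert g) n k.+1 = \sum_(i < n) ('C(i, k))%:R * cc g n i.+1.
Proof.
rewrite core big_ord_recr (_ : cc g n (@ord_max n).+1 = 0); last exact: (@cc_small _ g n n.+1).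
by rewrite mulr0 Monoid.mulm1.
 Qed.
Lemma kform (C : comRingType) (g : nat -> C) n k : (1 <= k)%N -> (k <= n)%N ->
  cc (invert g) n k = \sum_(k <= i < n.+1) ('C(i.-1, k.-1))%:R * cc g n i.
Proof.
case: k => // k _ Hk; rewrite core -(big_mkord xpredT (fun i => ('C(i, k))%:R * cc g n i.+1)).
rewrite [RHS]big_add1 big_nat_recr // (@cc_small _ g n n.+1) // mulr0 Monoid.mulm1.
rewrite (big_cat_nat _ (n := k)) //=; last by lia.
rewrite [X in X + _ = _]big1_seq ?add0r //.
move=> i /andP[_]; rewrite mem_index_iota => /andP[H1 H2].
by rewrite bin_small ?mul0r.
Qed.

Lemma sum_trunc (C : comRingType) n (i : 'I_n) (F G : nat -> C) :
  \sum_(l < n) (if (l <= i)%N then F l else 0) * G l = \sum_(l < i.+1) G l * F l.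
Proof.
rewrite -(big_mkord xpredT (fun l => (if (l <= i)%N then F l else 0) * G l)).
have Hi : (i.+1 <= n)%N := ltn_ord i.
rewrite (big_cat_nat _ (n := i.+1)) //=.
rewrite [X in _ + X]big1_seq ?addr0; last first.
  move=> l /andP[_]; rewrite mem_index_iota => /andP[H1 H2].
  by rewrite ifF ?mul0r //; apply/negbTE; rewrite -ltnNge.
rewrite big_mkord; apply: eq_bigr => l _.
rewrite ifT; first exact: mulrC.
by rewrite -ltnS.
Qed.

Theorem proposition6 (R : realType) (f0 : nat -> R[i]) (m n : nat) :
  (1 < m)%N -> (1 <= n)%N ->
  Cmat f0 m n = Cmat f0 m.-1 n *m Lmat _ n /\
  (forall k : nat, (1 <= k <= n)%N ->
     cm f0 m n k = \sum_(k <= i < n.+1) ('C(i.-1, k.-1))%:R * cm f0 m.-1 n i).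
Proof.
move=> Hm Hn.
have Efm : fm f0 m.-1 = invert (fm f0 m.-2).
  by case: m Hm => [|[|m']] //= _.
have Em : m.-1.-1 = m.-2 by [].
split.
  apply/matrixP => i j.
  rewrite !mxE; under eq_bigr => l _ do rewrite !mxE.
  rewrite /cm Efm.
  case: (leqP j i) => Hji.
    rewrite (@sum_trunc _ n i (fun l => cc (fm f0 m.-2) i.+1 l.+1) (fun l => ('C(l, j))%:R)).
    exact: core'.
  rewrite big1 // => l _.
  case: ifP => Hl; last by rewrite mul0r.
  by rewrite bin_small ?mulr0 //; apply: leq_ltn_trans Hji.
move=> k /andP[H1 H2]; rewrite /cm Efm kform //.
Qed.
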